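(* Let $l^1 < l^2 < l^3$ and let $g : [l^1,l^3] \to \mathbb{R}$ be continuous (and defined at $0$), concave on $[l^1,l^2]$ and convex on $[l^2,l^3]$. Let $\alpha^1 = (g(l^2)-g(l^1))/(l^2-l^1)$. For $x \in [l^1,l^3]$ define the continuous relaxation of the Incremental Model $$g_{IM}(x) = \min\Big\{ g(l^1) + \alpha^1\phi^1 + \gamma^2 \;:\; \gamma^2 \ge [g(l^2 + \phi^2/\psi^2) - g(l^2)]\psi^2,\ x = l^1 + \phi^1 + \phi^2,\ (l^{s+1}-l^s)\psi^{s+1} \le \phi^s \le (l^{s+1}-l^s)\psi^s \ (s=1,2),\ \psi^1 = 1,\ \psi^3 = 0\Big\}$$ and the continuous relaxation of the Multiple Choice Model $$g_{MCM}(x) = \min\Big\{ g(0)y^2 + \alpha^1 x^1 + [g(l^1) - \alpha^1 l^1]y^1 + z^2 \;:\; x = x^1 + x^2,\ z^2 \ge [g(x^2/y^2) - g(0)]y^2,\ l^s y^s \le x^s \le l^{s+1}y^s\ (s=1,2),\ y^1 + y^2 = 1,\ y^1,y^2 \ge 0\Big\},$$ where a perspective term $[h(a/b)]b$ with $b=0$ (and hence $a=0$) is interpreted as $0$. Then $g_{IM}(x) = g_{MCM}(x)$ for every $x \in [l^1,l^3]$, i.e. the continuous relaxations of the Incremental Model and the Multiple Choice Model are equivalent.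
   Context: These are the two piecewise-convex formulations (with perspective reformulation on the convex interval and the secant on the concave interval) of a univariate function whose domain splits into a concave interval followed by a convex interval; the binary activation variables ($\psi^2$ in the Incremental Model, $y^1,y^2$ in the Multiple Choice Model) are relaxed to be continuous. *)

(* Defs.v *)
From Stdlib Require Import Reals.
Open Scope R_scope.

Definition persp (h : R -> R) (a b : R) : R :=
  if Req_EM_T b 0 then 0 else h (a / b) * b.

Definition continuous_on_Icc (g : R -> R) (a b : R) : Prop :=
  forall x, a <= x <= b ->
    forall eps, 0 < eps -> exists delta, 0 < delta /\
      forall y, a <= y <= b -> Rabs (y - x) < delta -> Rabs (g y - g x) < eps.

Definition convex_on (g : R -> R) (a b : R) : Prop :=
  forall x y t, a <= x <= b -> a <= y <= b -> 0 <= t <= 1 ->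
    g (t * x + (1 - t) * y) <= t * g x + (1 - t) * g y.

Definition concave_on (g : R -> R) (a b : R) : Prop :=
  forall x y t, a <= x <= b -> a <= y <= b -> 0 <= t <= 1 ->
    t * g x + (1 - t) * g y <= g (t * x + (1 - t) * y).

Definition is_min (S : R -> Prop) (v : R) : Prop :=
  S v /\ forall w, S w -> v <= w.

Definition IM_values (g : R -> R) (l1 l2 l3 x : R) (v : R) : Prop :=
  let alpha1 := (g l2 - g l1) / (l2 - l1) in
  exists phi1 phi2 psi1 psi2 psi3 gam2,
    psi1 = 1 /\ psi3 = 0 /\
    gam2 >= persp (fun t => g (l2 + t) - g l2) phi2 psi2 /\
    x = l1 + phi1 + phi2 /\
    (l2 - l1) * psi2 <= phi1 <= (l2 - l1) * psi1 /\
    (l3 - l2) * psi3 <= phi2 <= (l3 - l2) * psi2 /\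
    v = g l1 + alpha1 * phi1 + gam2.

Definition MCM_values (g : R -> R) (l1 l2 l3 x : R) (v : R) : Prop :=
  let alpha1 := (g l2 - g l1) / (l2 - l1) in
  exists x1 x2 y1 y2 z2,
    x = x1 + x2 /\
    z2 >= persp (fun t => g t - g 0) x2 y2 /\
    l1 * y1 <= x1 <= l2 * y1 /\
    l2 * y2 <= x2 <= l3 * y2 /\
    y1 + y2 = 1 /\ y1 >= 0 /\ y2 >= 0 /\
    v = g 0 * y2 + alpha1 * x1 + (g l1 - alpha1 * l1) * y1 + z2.

(* Main.v *)
Require Import Defs.
From Stdlib Require Import Reals.
From Stdlib Require Import Lra Psatz.
Open Scope R_scope.

Lemma core_L (g : R -> R) l1 l2 l3 s al psi P Q b x V :
  (forall t, l2 <= t <= l3 -> g l1 + s * (t - l1) <= g t) ->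
  s <= al -> 0 <= psi <= 1 -> (1 - psi) * l1 <= Q ->
  P >= (1 - psi) * g l1 + al * (Q - (1 - psi) * l1) ->
  l2 <= b <= l3 -> x = Q + psi * b -> V >= P + psi * g b ->
  g l1 + s * (x - l1) <= V.
Proof.
  intros Lb hs hp hQ hP hb hx hV.
  assert (h1 : psi * (g l1 + s * (b - l1)) <= psi * g b)
    by (apply Rmult_le_compat_l; [lra | apply Lb; lra]).
  assert (h2 : 0 <= (al - s) * (Q - (1 - psi) * l1)) by (apply Rmult_le_pos; lra).
  subst x. nra.
Qed.

Lemma core_G (g : R -> R) l1 l2 l3 s al psi P Q b x V bs :
  (forall t, l2 <= t <= l3 -> g l1 + s * (t - l1) <= g t) ->
  convex_on g l2 l3 ->
  g bs = g l1 + s * (bs - l1) -> l2 <= bs <= l3 -> bs < x ->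
  s <= al -> 0 <= psi <= 1 -> (1 - psi) * l1 <= Q -> Q <= (1 - psi) * l2 ->
  P >= (1 - psi) * g l1 + al * (Q - (1 - psi) * l1) ->
  l2 <= b <= l3 -> x = Q + psi * b -> V >= P + psi * g b ->
  g x <= V.
Proof.
  intros Lb cv hbs hbs1 hx' hs hp hQ hQ2 hP hb hx hV.
  assert (hQ3 : Q <= (1 - psi) * bs) by nra.
  assert (hbb : bs < b).
  { destruct (Rlt_le_dec bs b) as [h|h]; auto. nra. }
  assert (hxb : x <= b) by nra.
  set (t := (b - x) / (b - bs)).
  assert (ht : t * (b - bs) = b - x) by (unfold t; field; lra).
  assert (ht0 : 0 <= t) by (unfold t; apply Rmult_le_pos; [lra| left; apply Rinv_0_lt_compat; lra]).
  assert (ht1 : t <= 1) by nra.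
  assert (htp : 1 - psi <= t) by nra.
  assert (hxe : t * bs + (1 - t) * b = x) by nra.
  assert (hc := cv bs b t hbs1 hb (conj ht0 ht1)). rewrite hxe in hc.
  assert (h1 : (psi - 1 + t) * (g l1 + s * (b - l1)) <= (psi - 1 + t) * g b)
    by (apply Rmult_le_compat_l; [lra | apply Lb; lra]).
  assert (h2 : 0 <= (al - s) * (Q - (1 - psi) * l1)) by (apply Rmult_le_pos; lra).
  subst x. nra.
Qed.
Definition clamp (a b t : R) := Rmax a (Rmin b t).

Lemma clamp_in a b t : a <= b -> a <= clamp a b t <= b.
Proof. intros; unfold clamp, Rmax, Rmin; repeat destruct Rle_dec; lra. Qed.

Lemma clamp_lip a b t u : a <= b -> Rabs (clamp a b t - clamp a b u) <= Rabs (t - u).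
Proof. intros; unfold clamp, Rmax, Rmin; repeat destruct Rle_dec; unfold Rabs; repeat destruct Rcase_abs; lra. Qed.

Lemma clamp_id a b t : a <= t <= b -> clamp a b t = t.
Proof. intros; unfold clamp, Rmax, Rmin; repeat destruct Rle_dec; lra. Qed.

Lemma cont_clamp g l1 l2 l3 c : l1 <= l2 -> l2 <= l3 -> continuous_on_Icc g l1 l3 ->
  continuity_pt (fun t => g (clamp l2 l3 t)) c.
Proof.
  intros h12 h23 hc.
  unfold continuity_pt, continue_in, limit1_in, limit_in; simpl; unfold R_dist.
  intros eps heps.
  destruct (clamp_in l2 l3 c h23) as [c1 c2].
  destruct (hc (clamp l2 l3 c) ltac:(lra) eps heps) as [d [hd H]].
  exists d; split; auto. intros y [_ hy].
  destruct (clamp_in l2 l3 y h23).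
  apply H. lra. eapply Rle_lt_trans. apply clamp_lip; lra. auto.
Qed.

Lemma minimizer g l1 l2 l3 : l1 < l2 -> l2 < l3 -> continuous_on_Icc g l1 l3 ->
  exists s bs, l2 <= bs <= l3 /\ g bs = g l1 + s * (bs - l1) /\
    (forall t, l2 <= t <= l3 -> g l1 + s * (t - l1) <= g t) /\
    s <= (g l2 - g l1) / (l2 - l1).
Proof.
  intros h12 h23 hc.
  set (f := fun t => (g (clamp l2 l3 t) - g l1) / (t - l1)).
  destruct (continuity_ab_min f l2 l3 ltac:(lra)) as [bs [Hm Hb]].
  { intros c hc'. unfold f. apply continuity_pt_div.
    - apply continuity_pt_minus. apply (cont_clamp g l1 l2 l3); auto; lra.
      apply continuity_pt_const. intros u v; reflexivity.
    - apply continuity_pt_minus. apply derivable_continuous_pt, derivable_pt_id.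
      apply continuity_pt_const. intros u v; reflexivity.
    - lra. }
  exists (f bs), bs. unfold f in *.
  rewrite clamp_id in Hm |- * by lra.
  split; auto. split. field. lra.
  split.
  - intros t ht. specialize (Hm t ht). rewrite clamp_id in Hm by lra.
    apply Rmult_le_compat_r with (r := t - l1) in Hm; [|lra].
    assert (E : (g t - g l1) / (t - l1) * (t - l1) = g t - g l1) by (field; lra).
    lra.
  - specialize (Hm l2 ltac:(lra)). rewrite clamp_id in Hm by lra. exact Hm.
Qed.

Lemma bounds (g : R -> R) l1 l2 l3 s al bs x psi P Q b V :
  (forall t, l2 <= t <= l3 -> g l1 + s * (t - l1) <= g t) ->
  convex_on g l2 l3 ->
  g bs = g l1 + s * (bs - l1) -> l2 <= bs <= l3 ->
  s <= al -> 0 <= psi <= 1 -> (1 - psi) * l1 <= Q -> Q <= (1 - psi) * l2 ->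
  P >= (1 - psi) * g l1 + al * (Q - (1 - psi) * l1) ->
  l2 <= b <= l3 -> x = Q + psi * b -> V >= P + psi * g b ->
  g l1 + s * (x - l1) <= V /\ (bs < x -> g x <= V).
Proof.
  intros. split.
  - eapply core_L; eauto.
  - intros; eapply core_G; eauto.
Qed.

Theorem proposition1 (g : R -> R) (l1 l2 l3 : R) :
  l1 < l2 -> l2 < l3 ->
  continuous_on_Icc g l1 l3 ->
  concave_on g l1 l2 ->
  convex_on g l2 l3 ->
  forall x, l1 <= x <= l3 ->
    exists v, is_min (IM_values g l1 l2 l3 x) v /\
              is_min (MCM_values g l1 l2 l3 x) v.
Proof.
  intros h12 h23 hc hcc hcv x hx.
  destruct (minimizer g l1 l2 l3 h12 h23 hc) as [s [bs [Hbs [Hg [Lb Hs]]]]].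
  set (al := (g l2 - g l1) / (l2 - l1)) in *.
  assert (Hal : g l2 = g l1 + al * (l2 - l1)) by (unfold al; field; lra).
  assert (BIM : forall V, IM_values g l1 l2 l3 x V ->
     g l1 + s * (x - l1) <= V /\ (bs < x -> g x <= V)).
  { intros V [phi1 [phi2 [psi1 [psi2 [psi3 [gam [-> [-> [Hgam [Hx [Hp1 [Hp2 HV]]]]]]]]]]]].
    fold al in HV.
    assert (hp0 : 0 <= psi2) by nra.
    assert (hp1 : psi2 <= 1) by nra.
    assert (Hb : exists b, l2 <= b <= l3 /\ psi2 * b = psi2 * l2 + phi2 /\
                 V >= g l1 + al * phi1 - psi2 * g l2 + psi2 * g b).
    { unfold persp in Hgam. destruct (Req_EM_T psi2 0) as [e|n].
      - subst psi2. exists l2. repeat split; lra.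
      - exists (l2 + phi2 / psi2).
        assert (hpp : 0 < psi2) by lra.
        assert (hq : 0 <= phi2 / psi2 <= l3 - l2).
        { split. apply Rmult_le_pos; [lra | left; apply Rinv_0_lt_compat; lra].
          apply Rmult_le_reg_r with psi2; auto.
          replace (phi2 / psi2 * psi2) with phi2 by (field; lra). lra. }
        split; [lra|]. split; [field; lra|]. nra. }
    destruct Hb as [b [hb [hpb hVb]]].
    assert (hw : psi2 * g l2 = psi2 * g l1 + psi2 * al * (l2 - l1)) by (rewrite Hal; ring).
    apply (bounds g l1 l2 l3 s al bs x psi2 (g l1 + al * phi1 - psi2 * g l2)
             (l1 + phi1 - psi2 * l2) b V); auto; try lra; nra. }
  assert (BMCM : forall V, MCM_values g l1 l2 l3 x V ->
     g l1 + s * (x - l1) <= V /\ (bs < x -> g x <= V)).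
  { intros V [x1 [x2 [y1 [y2 [z2 [Hx [Hz [H1 [H2 [Hy [Hy1 [Hy2 HV]]]]]]]]]]]].
    fold al in HV.
    assert (Hb : exists b, l2 <= b <= l3 /\ y2 * b = x2 /\
                 V >= al * x1 + (g l1 - al * l1) * y1 + y2 * g b).
    { unfold persp in Hz. destruct (Req_EM_T y2 0) as [e|n].
      - subst y2. exists l2. repeat split; nra.
      - exists (x2 / y2).
        assert (hpp : 0 < y2) by lra.
        assert (hq : l2 <= x2 / y2 <= l3).
        { split; apply Rmult_le_reg_r with y2; auto;
          replace (x2 / y2 * y2) with x2 by (field; lra); lra. }
        split; [lra|]. split; [field; lra|]. nra. }
    destruct Hb as [b [hb [hpb hVb]]].
    apply (bounds g l1 l2 l3 s al bs x y2 (al * x1 + (g l1 - al * l1) * y1)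
             x1 b V); auto; try lra; nra. }
  destruct (Rle_dec x bs) as [hxb|hxb].
  - exists (g l1 + s * (x - l1)).
    set (psi := (x - l1) / (bs - l1)).
    assert (hps : psi * (bs - l1) = x - l1) by (unfold psi; field; lra).
    assert (hp0 : 0 <= psi) by (unfold psi; apply Rmult_le_pos; [lra| left; apply Rinv_0_lt_compat; lra]).
    assert (hp1 : psi <= 1) by nra.
    split; split.
    + exists ((l2 - l1) * psi), ((bs - l2) * psi), 1, psi, 0,
        (persp (fun t => g (l2 + t) - g l2) ((bs - l2) * psi) psi).
      do 2 (split; [reflexivity|]). split; [right; reflexivity|].
      split; [nra|]. split; [nra|]. split; [nra|].
      fold al. unfold persp. destruct (Req_EM_T psi 0) as [e|n].
      * rewrite e in hps |- *. assert (x = l1) by lra. subst x. ring.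
      * replace (l2 + (bs - l2) * psi / psi) with bs by (field; lra).
        nra.
    + intros w hw. apply (proj1 (BIM w hw)).
    + exists (l1 * (1 - psi)), (bs * psi), (1 - psi), psi,
        (persp (fun t => g t - g 0) (bs * psi) psi).
      split; [nra|]. split; [right; reflexivity|].
      split; [nra|]. split; [nra|]. split; [ring|]. split; [lra|]. split; [lra|].
      fold al. unfold persp. destruct (Req_EM_T psi 0) as [e|n].
      * rewrite e in hps |- *. assert (x = l1) by lra. subst x. ring.
      * replace (bs * psi / psi) with bs by (field; lra).
        nra.
    + intros w hw. apply (proj1 (BMCM w hw)).
  - apply Rnot_le_lt in hxb. exists (g x).
    split; split.
    + exists (l2 - l1), (x - l2), 1, 1, 0,
        (persp (fun t => g (l2 + t) - g l2) (x - l2) 1).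
      do 2 (split; [reflexivity|]). split; [right; reflexivity|].
      split; [ring|]. split; [lra|]. split; [lra|].
      fold al. unfold persp. destruct (Req_EM_T 1 0) as [e|n]; [lra|].
      replace (l2 + (x - l2) / 1) with x by field. lra.
    + intros w hw. apply (proj2 (BIM w hw) hxb).
    + exists 0, x, 0, 1, (persp (fun t => g t - g 0) x 1).
      split; [ring|]. split; [right; reflexivity|].
      split; [lra|]. split; [lra|]. split; [ring|]. split; [lra|]. split; [lra|].
      fold al. unfold persp. destruct (Req_EM_T 1 0) as [e|n]; [lra|].
      replace (x / 1) with x by field. ring.
    + intros w hw. apply (proj2 (BMCM w hw) hxb).
Qed.
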